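(* Let $d\ge 1$, $0<\alpha\le 1$ and $M>1$. For the online hitting set problem in which the point set is $\mathbb{Z}^d$ and the objects are $\alpha$-fat objects in $\mathbb{R}^d$ with widths in the range $[1,M]$, the deterministic online algorithm $\mathrm{ANC}$ described below achieves a competitive ratio of at most $\lfloor \frac{2}{\alpha}+2\rfloor^d\left(\lfloor\log_2 M\rfloor+1\right)$.
   Context: Online hitting set problem: the point set is known in advance; objects arrive one by one; upon each arrival the algorithm must ensure its current solution (points can only be added, never removed) contains a point of every object presented so far. The competitive ratio is the supremum over input sequences of the size of the algorithm's solution divided by the minimum size of an offline hitting set of the sequence. An object is a compact subset of $\mathbb{R}^d$ with non-empty interior; $\partial\sigma$ is its boundary. All distances $d_\infty$ are $L_\infty$ distances. For $x\in\sigma$ let $\alpha(x)=\min_{y\in\partial\sigma}d_\infty(x,y)/\max_{y\in\partial\sigma}d_\infty(x,y)$ and $\alpha(\sigma)=\max_{x\in\sigma}\alpha(x)$; $\sigma$ is $\alpha$-fat if $\alpha(\sigma)\ge\alpha$. A center of $\sigma$ is a point $c\in\sigma$ with $\alpha(c)=\alpha(\sigma)$ (if several, one is fixed arbitrarily); the width of $\sigma$ is $\min_{y\in\partial\sigma}d_\infty(c,y)$. Algorithm $\mathrm{ANC}$: when an object $\sigma$ with center $c$ and width $w$ arrives, if it contains a point of the current solution do nothing. Otherwise let $i=\lfloor\log_2 w\rfloor$; for each $j\in[d]$ write uniquely $c(x_j)=z_j+f_j$ with $z_j\in 2^{i+1}\mathbb{Z}$ and $f_j\in[0,2^{i+1})$,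 and define the point $r$ by $r(x_j)=z_j$ if $f_j\in[0,2^i)$ and $r(x_j)=z_j+2^{i+1}$ if $f_j\in[2^i,2^{i+1})$; add $r$ (a point of $(2^{i+1}\mathbb{Z})^d\subseteq\mathbb{Z}^d$) to the solution. *)

(* Defs.v *)
From HB Require Import structures.
From mathcomp Require Import all_boot all_order all_algebra.
From mathcomp Require Import all_classical all_reals all_analysis.
Set Implicit Arguments. Unset Strict Implicit. Unset Printing Implicit Defensive.
Import Order.TTheory GRing.Theory Num.Theory.
Import numFieldNormedType.Exports.
Local Open Scope classical_set_scope.
Local Open Scope ring_scope.

Section Defs.
Variables (R : realType) (d : nat).
Local Notation V := 'rV[R]_d.

(* L_infinity distance: the canonical norm on 'rV[R]_d is the max norm
   (mx_norm), and the topology on 'rV[R]_d is the one it induces. *)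
Definition dinf (x y : V) : R := `|x - y|.

Definition bd (s : set V) : set V := closure s `\` interior s.

Definition is_object (s : set V) : Prop := compact s /\ interior s !=set0.

Definition alpha_pt (s : set V) (x : V) : R :=
  inf [set dinf x y | y in bd s] / sup [set dinf x y | y in bd s].

Definition alpha_obj (s : set V) : R := sup [set alpha_pt s x | x in s].

Definition fat (a : R) (s : set V) : Prop := a <= alpha_obj s.

Definition is_center (s : set V) (c : V) : Prop :=
  s c /\ alpha_pt s c = alpha_obj s.

Definition width (s : set V) (c : V) : R := inf [set dinf c y | y in bd s].

Definition log2 (x : R) : R := ln x / ln 2.

Definition anc_point (c : V) (w : R) : V :=
  let i : int := Num.floor (log2 w) in
  let s : R := (2 : R) ^ (i + 1) in
  \row_j (let z := s * (Num.floor (c ord0 j / s))%:~R in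
          let f := c ord0 j - z in
          if f < (2 : R) ^ i then z else z + s).

(* one step of ANC; ctr fixes the center of every object *)
Definition anc_step (ctr : set V -> V) (sol : seq V) (s : set V) : seq V :=
  if `[< exists2 p, p \in sol & s p >] then sol
  else anc_point (ctr s) (width s (ctr s)) :: sol.

Definition anc_run (ctr : set V -> V) (objs : seq (set V)) : seq V :=
  foldl (anc_step ctr) [::] objs.

Definition zpt (p : 'rV[int]_d) : V := map_mx (fun z : int => z%:~R) p.

Definition hitting_set (objs : seq (set V)) (H : seq 'rV[int]_d) : Prop :=
  forall s, s \in objs -> exists2 p, p \in H & s (zpt p).

End Defs.

(* Main.v *)
Require Import Defs.
From HB Require Import structures.
From mathcomp Require Import all_boot all_order all_algebra.
From mathcomp Require Import all_classical all_reals all_analysis.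
From mathcomp Require Import lra.
Import Order.TTheory GRing.Theory Num.Theory.
Import numFieldNormedType.Exports.
Local Open Scope classical_set_scope.
Local Open Scope ring_scope.
Lemma entry_le (R : realType) d (v : 'rV[R]_d) j : `|v ord0 j| <= `|v|.
Proof.
have -> : `|v| = mx_norm v by [].
rewrite mx_normrE.
exact: (le_bigmax _ _ (ord0, j)).
Qed.
Section S.
Variables (R : realType) (d : nat).
Local Notation V := 'rV[R]_d.

Lemma seg_bd (s : set V) (u x : V) : closed s -> s u -> ~ s x ->
  exists2 t : R, 0 <= t < 1 & bd s (u + t *: (x - u)).
Proof.
move=> cs su nsx.
pose A := [set t : R | 0 <= t <= 1 /\ s (u + t *: (x - u))].
have A0 : A 0 by split; rewrite ?lexx ?ler01 // scale0r addr0.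
have hsA : has_sup A by split; [exists 0 | exists 1 => t [/andP[]]].
pose t0 := sup A.
have t0ge : 0 <= t0 by exact: (ub_le_sup (proj2 hsA) A0).
have t0le : t0 <= 1 by apply: sup_le_ub; [exists 0| move=> t [/andP[]]].
set N := `|x - u| + 1.
have Npos : 0 < N by rewrite ltr_wpDl.
have st0 : s (u + t0 *: (x - u)).
  have E := (closure_id s).1 cs.
  suff : closure s (u + t0 *: (x - u)) by rewrite -E.
  move=> B /nbhs_ballP [e /= e0 eB].
  have [t At ht] := sup_adherent (divr_gt0 e0 Npos) hsA.
  exists (u + t *: (x - u)); split; first by case: At.
  apply: eB; rewrite -ball_normE /=.
  have tle : t <= t0 by exact: (ub_le_sup (proj2 hsA) At).
  have -> : u + t0 *: (x - u) - (u + t *: (x - u)) = (t0 - t) *: (x - u).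
    by rewrite scalerBl opprD addrACA subrr add0r.
  rewrite normrZ.
  rewrite ger0_norm ?subr_ge0 //.
  apply: (@le_lt_trans _ _ ((t0 - t) * N)).
    by rewrite ler_wpM2l ?subr_ge0 // lerDl.
  by rewrite -ltr_pdivlMr // ltrBlDl -ltrBlDr.
have t0lt : t0 < 1.
  rewrite lt_neqAle t0le andbT; apply/eqP => t01; apply: nsx.
  by move: st0; rewrite t01 scale1r addrC subrK.
exists t0; first by rewrite t0ge.
split; first exact: subset_closure.
move=> /nbhs_ballP [e /= e0 eB].
have [dl [dl0 dlle]] : exists dl : R, 0 < dl /\ dl < Num.min (1 - t0) (e / N).
  exists (Num.min (1 - t0) (e / N) / 2); split.
    by rewrite divr_gt0 // lt_min subr_gt0 t0lt divr_gt0.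
  by rewrite ltr_pdivrMr // ltr_pMr ?ltr1n // lt_min subr_gt0 t0lt divr_gt0.
have : A (t0 + dl).
  split.
    have : 0 <= t0 + dl by rewrite addr_ge0 // ltW.
    move=> h0; rewrite h0 /=.
    have : dl < 1 - t0 by apply: lt_le_trans dlle _; rewrite ge_min lexx.
    by move=> h; lra.
  have -> : u + (t0 + dl) *: (x - u) = u + t0 *: (x - u) + dl *: (x - u).
    by rewrite scalerDl addrA.
  apply: eB; rewrite -ball_normE /= opprD addrA subrr add0r normrN normrZ.
  idtac.
  rewrite ger0_norm ?ltW //.
  apply: (@le_lt_trans _ _ (dl * N)); first by rewrite ?ltr_pM2l ?ler_wpM2l ?ltW // /N ?ltrDl ?lerDl.
  rewrite -ltr_pdivlMr //; apply: lt_le_trans dlle _; rewrite ge_min lexx orbT //.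
move=> /(ub_le_sup (proj2 hsA)).
by rewrite -/t0 gerDl leNgt dl0.
Qed.

Lemma compact_bnd (s : set V) : compact s -> exists B : R, forall x, s x -> `|x| <= B.
Proof.
move=> /compact_bounded [B [_ HB]].
exists (B + 1) => x sx; apply: (HB (B + 1)) => //; by rewrite ltrDl.
Qed.

Lemma dist_bound (s : set V) (c p : V) (a : R) : compact s -> 0 < a ->
  0 <= width s c -> a <= alpha_pt s c -> s p -> dinf c p <= width s c / a.
Proof.
move=> cps a0 w0 ha sp.
have [->|pc] := eqVneq p c.
  by rewrite /dinf subrr normr0 divr_ge0 // ltW.
have [B HB] := @compact_bnd s cps.
have cls : closed s by apply: (@compact_closed _ s) => //; exact: norm_hausdorff.
have E := (closure_id s).1 cls.
have npc : 0 < `|p - c| by rewrite normr_gt0 subr_eq0.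
pose k := (B + `|p| + 1) / `|p - c|.
have k0 : 0 <= k.
  rewrite divr_ge0 // ?ltW //; have := HB p sp; have := normr_ge0 p; lra.
have nsx : ~ s (p + k *: (p - c)).
  move=> /HB; apply/negP; rewrite -ltNge.
  have h1 := ler_normB (p + k *: (p - c)) p.
  rewrite addrAC subrr add0r in h1.
  have h2 : `|k *: (p - c)| = B + `|p| + 1.
    by rewrite normrZ ger0_norm // /k divfK // gt_eqF.
  lra.
have [t /andP [t0 t1] bq] := @seg_bd s p _ cls sp nsx.
set q := p + t *: (p + k *: (p - c) - p) in bq.
have dq : dinf c q = (1 + t * k) * `|p - c|.
  rewrite /dinf /q; have -> : p + k *: (p - c) - p = k *: (p - c) by rewrite addrAC subrr add0r.
  rewrite scalerA.
  have -> : c - (p + (t * k) *: (p - c)) = - ((1 + t * k) *: (p - c)).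
    by rewrite scalerDl scale1r !opprD opprK addrA [c + _]addrC.
  by rewrite normrN normrZ ger0_norm // addr_ge0 // mulr_ge0.
pose D := [set dinf c y | y in bd s].
have hsD : has_sup D.
  split; first by exists (dinf c q), q.
  exists (`|c| + B) => _ [y [ys _] <-].
  have sy : s y by rewrite E.
  rewrite /dinf; apply: le_trans (ler_normB _ _) _; rewrite lerD2l; exact: HB.
have Sge : dinf c p <= sup D.
  apply: le_trans (ub_le_sup (proj2 hsD) (ex_intro2 _ _ q bq erefl)).
  rewrite dq /dinf distrC ler_peMl //; rewrite lerDl mulr_ge0 //.
have S0 : 0 < sup D.
  by apply: lt_le_trans Sge; rewrite /dinf distrC.
move: ha; rewrite /alpha_pt -/D => ha.
apply: (le_trans Sge); rewrite ler_pdivlMr // mulrC -ler_pdivlMr //.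
Qed.
End S.
Section N.
Variable R : realType.

Lemma ln2_gt0 : 0 < ln (2 : R).
Proof. by apply: ln_gt0; rewrite ltr1n. Qed.

Lemma log2_le (x y : R) : 0 < x -> x <= y -> log2 x <= log2 y.
Proof.
move=> x0 xy; rewrite /log2 ler_pM2r ?invr_gt0 ?ln2_gt0 //.
by rewrite ler_ln // ?posrE // (lt_le_trans x0 xy).
Qed.

Lemma lnX2 (n : nat) : ln ((2:R) ^+ n) = n%:R * ln 2.
Proof. by rewrite lnXn ?mulr_natl. Qed.

Lemma lvl (w : R) : 1 <= w ->
  exists k : nat, Num.floor (log2 w) = k%:Z /\ w < 2 ^+ k.+1.
Proof.
move=> w1; have w0 : 0 < w by apply: lt_le_trans w1.
have l0 : 0 <= log2 w.
  by rewrite /log2 divr_ge0 ?ln_ge0 // ler1n.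
have f0 : 0 <= Num.floor (log2 w) by rewrite floor_ge0.
have [k hk] : exists k : nat, Num.floor (log2 w) = k%:Z.
  by exists `|Num.floor (log2 w)|%N; rewrite gez0_abs.
exists k; split => //.
have := floor_itv (log2 w) => /andP [_ h].
rewrite hk /log2 ltr_pdivrMr ?ln2_gt0 // in h.
have e : (k%:Z + 1)%:~R * ln (2:R) = ln ((2:R) ^+ k.+1).
  rewrite lnX2; congr (_ * _); rewrite intrD -addn1 natrD //.
rewrite -ltr_ln ?posrE ?exprn_gt0 // -e //.
Qed.

Lemma offb (a S x y : R) (m : int) : 0 < a -> 0 < S -> y = S * m%:~R ->
  `|y - x| < S / 2 + S / a ->
  0 <= m - (Num.floor (x / S - (1 / 2 + 1 / a)) + 1) /\
  m - (Num.floor (x / S - (1 / 2 + 1 / a)) + 1) < Num.floor (2 / a + 2).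
Proof.
move=> a0 S0 -> h.
have h' : `|m%:~R - x / S| < 1 / 2 + 1 / a.
  have e : m%:~R - x / S = (S * m%:~R - x) / S by rewrite mulrBl [S * _]mulrC mulfK // gt_eqF.
  rewrite e normrM normfV (gtr0_norm S0) ltr_pdivrMr //.
  suff -> : (1 / 2 + 1 / a) * S = S / 2 + S / a by []. by rewrite mulrDl !div1r ![_^-1 * S]mulrC.
set z := x / S - (1 / 2 + 1 / a).
have /andP [fl1 fl2] := floor_itv z.
move: h'; rewrite ltr_norml => /andP [hl hr].
split.
  rewrite subr_ge0 -ltzD1 ltrD2r -(ltr_int R); rewrite /z in fl1; lra.
rewrite -lezD1.
have -> : m - (Num.floor z + 1) + 1 = m - Num.floor z by rewrite opprD addrA subrK.
rewrite floor_ge_int intrB; rewrite intrD in fl2; rewrite /z in fl1 fl2.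
lra.
Qed.
End N.
Section C.
Variables (R : realType) (d : nat).
Local Notation V := 'rV[R]_d.

Lemma anc_coord (c : V) (w : R) (k : nat) : Num.floor (log2 w) = k%:Z ->
  forall j, exists m : int, anc_point c w ord0 j = 2 ^+ k.+1 * m%:~R /\
    `|anc_point c w ord0 j - c ord0 j| <= 2 ^+ k.
Proof.
move=> hk j; rewrite /anc_point mxE hk.
have -> : k%:Z + 1 = k.+1%:Z by rewrite -addn1 PoszD.
rewrite -!exprnP.
set S : R := 2 ^+ k.+1.
have S0 : 0 < S by rewrite exprn_gt0.
have eS : S = 2 ^+ k + 2 ^+ k by rewrite /S exprS mulr2n mulrDl mul1r.
have := floor_itv (c ord0 j / S) => /andP [].
set F := Num.floor (c ord0 j / S).
rewrite ler_pdivlMr // ltr_pdivrMr // intrD mulrDl mul1r.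
rewrite ![_ * S]mulrC.
set P := S * F%:~R => h1 h2.
case: ifP => hf.
  exists F; split => //; rewrite ler0_norm; lra.
exists (F + 1); split; first by rewrite intrD mulrDr mulr1.
move: hf => /negbT; rewrite -leNgt => hf.
rewrite ger0_norm; lra.
Qed.

Lemma anc_run_in (ctr : set V -> V) (objs : seq (set V)) r :
  r \in anc_run ctr objs ->
  exists2 s, s \in objs & r = anc_point (ctr s) (width s (ctr s)).
Proof.
rewrite /anc_run.
have : forall sol, r \in foldl (anc_step ctr) sol objs -> r \in sol \/
  exists2 s, s \in objs & r = anc_point (ctr s) (width s (ctr s)).
  elim: objs => [|o os IH] sol /=; first by left.
  move=> /IH [|[s so ->]]; last by right; exists s => //; rewrite inE so orbT.
  rewrite /anc_step; case: ifP => _; first by left.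
  rewrite inE => /orP [/eqP ->|]; last by left.
  by right; exists o => //; rewrite inE eqxx.
by move=> h /h [].
Qed.
End C.
Lemma inj_count (U : eqType) (T : finType) (P : U -> T -> Prop) (L : seq U) :
  uniq L -> (forall x, x \in L -> exists t, P x t) ->
  (forall x y t, x \in L -> y \in L -> P x t -> P y t -> x = y) ->
  (size L <= #|T|)%N.
Proof.
move=> uL ex inj.
suff [ts [uts sz _]] : exists ts : seq T, [/\ uniq ts, size ts = size L &
    forall t, t \in ts -> exists2 y, y \in L & P y t].
  by rewrite -sz -(card_uniqP uts); apply: max_card.
elim: L uL ex inj => [|x L IH] /=; first by exists [::].
move=> /andP [xL uL] ex inj.
have [||ts [uts sz hts]] := IH uL.
- by move=> y yL; apply: ex; rewrite inE yL orbT.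
- by move=> y z t yL zL; apply: inj; rewrite inE ?yL ?zL orbT.
have [t Pt] := ex x (mem_head _ _).
exists (t :: ts); split => /=; rewrite ?sz //.
- apply/andP; split => //; apply/negP => /hts [y yL Py].
  have xy : x = y by apply: (inj x y t) => //; rewrite inE ?yL ?eqxx ?orbT.
  by move: xL; rewrite xy yL.
- move=> t'; rewrite inE => /orP [/eqP ->|/hts [y yL Py]].
    by exists x => //; rewrite inE eqxx.
  by exists y => //; rewrite inE yL orbT.
Qed.

Theorem theorem3 (R : realType) (d : nat) (a M : R) :
  (0 < d)%N -> 0 < a -> a <= 1 -> 1 < M ->
  forall (ctr : set 'rV[R]_d -> 'rV[R]_d) (objs : seq (set 'rV[R]_d)),
  (forall s, s \in objs ->
     [/\ is_object s, fat a s, is_center s (ctr s)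
       & 1 <= width s (ctr s) <= M]) ->
  forall H : seq 'rV[int]_d, hitting_set objs H ->
  ((size (undup (anc_run ctr objs)))%:R : R) <=
    (((Num.floor (2 / a + 2))%:~R : R) ^+ d * ((Num.floor (log2 M))%:~R + 1))
    * (size (undup H))%:R.
Proof.
move=> d0 a0 a1 M1 ctr objs hobj H hH.
set L := undup (anc_run ctr objs).
set n := size (undup H).
set NM := Num.floor (log2 M).
set K := Num.floor (2 / a + 2).
have NM0 : 0 <= NM.
  have lM : 0 < ln M by apply: ln_gt0.
  have l2 : 0 < ln (2:R) := ln2_gt0 R.
  by rewrite /NM floor_ge0 /log2 divr_ge0 // ltW.
have K0 : 0 <= K by rewrite /K floor_ge0 addr_ge0 // divr_ge0 // ltW.
pose lof (p : 'rV[int]_d) (k : nat) (j : 'I_d) : int :=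
  Num.floor ((zpt R p) ord0 j / 2 ^+ k.+1 - (1 / 2 + 1 / a)) + 1.
pose T := ('I_n * 'I_(`|NM|.+1) * {ffun 'I_d -> 'I_`|K|})%type.
pose P (r : 'rV[R]_d) (t : T) := exists p, exists k : nat, exists m : 'I_d -> int,
  [/\ p \in H, (forall j, r ord0 j = 2 ^+ k.+1 * (m j)%:~R),
      nat_of_ord t.1.1 = index p (undup H), nat_of_ord t.1.2 = k &
      forall j, ((nat_of_ord (t.2 j)) : int) = m j - lof p k j].
have cnt : (size L <= #|{: T}|)%N.
  apply: (@inj_count _ _ P); first exact: undup_uniq.
  - move=> r; rewrite mem_undup => /anc_run_in [s so ->].
    have [[cps _] fs [cs hc] /andP [w1 wM]] := hobj s so.
    have [p pH sp] := hH s so.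
    set c := ctr s in cs hc w1 wM *; set w := width s c in w1 wM *.
    have [k [hk wk]] := @lvl R w w1.
    have db : dinf c (zpt R p) <= w / a.
      apply: dist_bound => //; first by apply: le_trans w1.
      by rewrite hc.
    have exm : forall j, exists m : int,
        (anc_point c w ord0 j == 2 ^+ k.+1 * m%:~R) &&
        (`|anc_point c w ord0 j - c ord0 j| <= 2 ^+ k).
      by move=> j; have [m [h1 h2]] := @anc_coord R d c w k hk j; exists m; rewrite h2 andbT h1 eqxx.
    pose m j := xchoose (exm j).
    have hm : forall j, anc_point c w ord0 j = 2 ^+ k.+1 * (m j)%:~R /\
        `|anc_point c w ord0 j - c ord0 j| <= 2 ^+ k.
      by move=> j; have /andP [/eqP ? ?] := xchooseP (exm j).
    have ob : forall j, 0 <= m j - lof p k j /\ m j - lof p k j < K.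
      move=> j; have [h1 h2] := hm j.
      apply: (@offb R a (2 ^+ k.+1) _ (anc_point c w ord0 j)) => //.
      have e1 : `|c ord0 j - zpt R p ord0 j| <= w / a.
        apply: le_trans db; rewrite /dinf.
        have := @entry_le R d (c - zpt R p) j; by rewrite !mxE.
      have e2 : w / a < 2 ^+ k.+1 / a by rewrite ltr_pM2r ?invr_gt0.
      have e3 : 2 ^+ k.+1 / 2 = (2 ^+ k : R).
        by rewrite exprSr mulfK.
      have e4 := ler_distD (c ord0 j) (anc_point c w ord0 j) (zpt R p ord0 j).
      rewrite e3; lra.
    have i1 : (index p (undup H) < n)%N by rewrite index_mem mem_undup.
    have i2 : (k < `|NM|.+1)%N.
      have kle : k%:Z <= NM.
        rewrite -hk /NM; apply: le_floor.
        by apply: log2_le; [apply: lt_le_trans w1 | ].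
      by rewrite ltnS; move: kle; rewrite -{1}(gez0_abs NM0) lez_nat.
    have i3 : forall j, (`|m j - lof p k j|%N < `|K|)%N.
      move=> j; have [hb1 hb2] := ob j.
      by rewrite -ltz_nat !gez0_abs.
    exists (Ordinal i1, Ordinal i2, [ffun j => Ordinal (i3 j)]).
    exists p, k, m; split => //=; first by move=> j; case: (hm j).
    by move=> j; rewrite ffunE /= gez0_abs //; case: (ob j).
  - move=> x y t _ _ [p [k [m [pH hx e1 e2 e3]]]] [p' [k' [m' [pH' hy e1' e2' e3']]]].
    have pp : p = p'.
      rewrite -{1}(@nth_index _ p p (undup H)) ?mem_undup // -e1 e1'.
      by rewrite nth_index // mem_undup.
    have kk : k = k' by rewrite -e2 e2'.
    subst p' k'.
    apply/rowP => j; rewrite hx hy.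
    have : m j = m' j.
      by have := e3 j; rewrite e3' -kk => h; apply: esym; exact: (addIr _ h).
    by move=> ->; rewrite -kk.
rewrite card_prod card_prod card_ffun !card_ord in cnt.
have eK : (K%:~R : R) = (`|K|%N)%:R by rewrite natr_absz ger0_norm.
have eN : (NM%:~R : R) = (`|NM|%N)%:R by rewrite natr_absz ger0_norm.
rewrite eK eN natr1 -natrX -!natrM ler_nat.
apply: (leq_trans cnt).
by rewrite -mulnA mulnC [(_.+1 * _)%N]mulnC.
Qed.
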